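(* Let $H$ be a real Hilbert space, $A:H\to2^H$ a maximal monotone operator with $\mathrm{zer}A\ne\emptyset$, $(\gamma_n)$ a sequence in $(0,\infty)$, $x_0\in H$ and $x_{n+1}=J_{\gamma_nA}x_n$. Then: (i) for all $n\in\mathbb{N}$, $m\ge1$ and $p\in H$, $\|x_{n+m}-p\|\le\|x_n-p\|+\sum_{i=n}^{n+m-1}\|p-J_{\gamma_iA}p\|$; (ii) $(x_n)$ is uniformly Fej\'er monotone w.r.t. $\mathrm{zer}A$ with modulus $\chi(n,m,r)=\max\{n+m-1,m(r+1)\}$, i.e. for all $r,n,m\in\mathbb{N}$ and all $p\in AF_{\chi(n,m,r)}$, $\|x_{n+l}-p\|<\|x_n-p\|+\frac1{r+1}$ for all $l\le m$.
   Context: $J_{\gamma A}:=(Id+\gamma A)^{-1}$ is the resolvent of $\gamma A$ (single-valued, defined on $H$). $AF_k:=\bigcap_{i\le k}\{x\in H\mid\|x-J_{\gamma_iA}x\|\le\frac1{k+1}\}$, so that $\mathrm{zer}A=\bigcap_kAF_k$. *)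

(* Defs.v *)
From HB Require Import structures.
From mathcomp Require Import all_boot all_order all_algebra.
From mathcomp Require Import all_classical all_reals all_analysis.
Set Implicit Arguments. Unset Strict Implicit. Unset Printing Implicit Defensive.
Import Order.TTheory GRing.Theory Num.Theory.
Import numFieldNormedType.Exports.
Local Open Scope classical_set_scope.
Local Open Scope ring_scope.

(* A real Hilbert space is modelled as a complete normed R-module [V]
   together with an inner product [ip] inducing its norm. *)
Definition inner_product {R : realType} {V : normedModType R}
  (ip : V -> V -> R) : Prop :=
  [/\ (forall x y, ip x y = ip y x),
      (forall (a : R) (x y z : V), ip (a *: x + y) z = a * ip x z + ip y z)
    & (forall x, ip x x = `|x| ^+ 2)].

Definition monotone_op {R : realType} {V : normedModType R}
  (ip : V -> V -> R) (A : V -> set V) : Prop :=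
  forall x y u v, A x u -> A y v -> 0 <= ip (x - y) (u - v).

Definition maximal_monotone {R : realType} {V : normedModType R}
  (ip : V -> V -> R) (A : V -> set V) : Prop :=
  monotone_op ip A /\
  forall B : V -> set V, monotone_op ip B ->
    (forall x u, A x u -> B x u) -> forall x u, B x u -> A x u.

Definition zer {R : realType} {V : normedModType R} (A : V -> set V) : set V :=
  [set x | A x 0].

(* Resolvent J_{gA} = (Id + gA)^{-1}: J x is the (unique, for A maximal
   monotone and g > 0, by Minty) y with x \in y + g A y,
   i.e. g^-1 (x - y) \in A y. *)
Definition resolvent {R : realType} {V : normedModType R}
  (A : V -> set V) (g : R) (x : V) : V :=
  get [set y | A y (g^-1 *: (x - y))].

Definition AF {R : realType} {V : normedModType R}
  (A : V -> set V) (gamma : nat -> R) (k : nat) : set V :=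
  [set x | forall i, (i <= k)%N ->
     `|x - resolvent A (gamma i) x| <= (k.+1%:R)^-1].

Definition chi (n m r : nat) : nat := maxn (n + m - 1) (m * r.+1).

(* Main.v *)
Require Import Defs.
From HB Require Import structures.
From mathcomp Require Import all_boot all_order all_algebra.
From mathcomp Require Import all_classical all_reals all_analysis.
From mathcomp Require Import ring lra.
Import Order.TTheory GRing.Theory Num.Theory.
Import numFieldNormedType.Exports.
Local Open Scope classical_set_scope.
Local Open Scope ring_scope.
Lemma le_eps (R : realType) (x y : R) : (forall e, 0 < e -> x <= y + e) -> x <= y.
Proof.
move=> H; rewrite leNgt; apply/negP => yx.
have := H ((x - y) / 2); rewrite divr_gt0 ?subr_gt0 // => /(_ isT); lra.
Qed.

Section Lim.
Variables (R : realType) (V : completeNormedModType R).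

Lemma lim_le (r : nat -> R) l b : r n @[n --> \oo] --> l -> (forall n, r n <= b) -> l <= b.
Proof.
move=> H Hb; apply: (closed_cvg _ (@closed_le R b) _ _ H).
by apply: nearW => n; apply: Hb.
Qed.
Lemma lim_ge (r : nat -> R) l b : r n @[n --> \oo] --> l -> (forall n, b <= r n) -> b <= l.
Proof.
move=> H Hb; apply: (closed_cvg _ (@closed_ge R b) _ _ H).
by apply: nearW => n; apply: Hb.
Qed.

Lemma cvg_sqn (u : nat -> V) l c :
  u n @[n --> \oo] --> l -> `|u n - c| ^+ 2 @[n --> \oo] --> `|l - c| ^+ 2.
Proof.
move=> H.
have H1 : `|u n - c| @[n --> \oo] --> `|l - c| by apply: cvg_norm; apply: cvgB => //; exact: cvg_cst.
by rewrite expr2; under eq_fun do rewrite expr2; apply: cvgM.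
Qed.

Lemma seq_cvg (u : nat -> V) (c : R) :
  (forall n k, `|u n - u k| ^+ 2 <= c * (n.+1%:R^-1 + k.+1%:R^-1)) -> cvg (u n @[n --> \oo]).
Proof.
move=> H; apply/cauchy_cvgP/cauchyP => e e0.
pose c' := `|c| + 1.
have c'0 : 0 < c' by rewrite /c'; have := normr_ge0 c; lra.
have [N HN] : exists N : nat, 2 * c' / e ^+ 2 < N.+1%:R.
  by exists (Num.Def.truncn (2 * c' / e ^+ 2)); exact: truncnS_gt.
have e20 : 0 < e ^+ 2 by rewrite exprn_gt0.
exists (u N); apply: (filterS _ (nbhs_infty_ge N)) => n /= Nn.
rewrite -ball_normE /ball_ /=.
have h1 : n.+1%:R^-1 <= N.+1%:R^-1 :> R.
  by rewrite lef_pV2 ?posrE ?ltr0n // ler_nat ltnS.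
have h0 : 0 <= N.+1%:R^-1 :> R by rewrite invr_ge0.
have h0' : 0 <= n.+1%:R^-1 :> R by rewrite invr_ge0.
have hNa : N.+1%:R * N.+1%:R^-1 = 1 :> R by rewrite mulfV // pnatr_eq0.
have h5 : 2 * c' < e ^+ 2 * N.+1%:R.
  by rewrite [e ^+ 2 * _]mulrC -ltr_pdivrMr.
move: h1 h0 h0' hNa h5; set a := (N.+1%:R^-1 : R); set b := (n.+1%:R^-1 : R).
set M := (N.+1%:R : R); move=> h1 h0 h0' hNa h5.
have h2 : c * (a + b) <= c' * (2 * a).
  apply: (le_trans (ler_norm _)); rewrite normrM.
  rewrite (ger0_norm (addr_ge0 h0 h0')).
  apply: ler_pM.
  - exact: normr_ge0.
  - exact: addr_ge0.
  - rewrite /c'; lra.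
  - lra.
have h3 : c' * (2 * a) < e ^+ 2.
  have : 2 * c' * a < e ^+ 2 * M * a by rewrite ltr_pM2r // lt0r invr_eq0 pnatr_eq0 h0.
  have -> : e ^+ 2 * M * a = e ^+ 2 by rewrite -mulrA hNa mulr1.
  by rewrite mulrCA mulrA.
have h4 : `|u N - u n| ^+ 2 <= c * (a + b) := H N n.
rewrite ltNge; apply/negP => he.
have : e ^+ 2 <= `|u N - u n| ^+ 2 by rewrite lerXn2r // ?nnegrE ?normr_ge0 // ltW.
lra.
Qed.
End Lim.
Arguments seq_cvg {R V}. Arguments cvg_sqn {R V}.
Arguments lim_le {R r l b}. Arguments lim_ge {R r l b}.
Section Min.
Variables (R : realType) (V : completeNormedModType R).

Lemma min_exists (C : set V) (f : V -> R) (lb : R) :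
  C !=set0 ->
  (forall a b, C a -> C b -> C (2^-1 *: (a + b))) ->
  (forall z, C z -> lb <= f z) ->
  (forall a b, C a -> C b ->
     f (2^-1 *: (a + b)) <= 2^-1 * (f a + f b) - 4^-1 * `|a - b| ^+ 2) ->
  (forall (u : nat -> V) l b, u n @[n --> \oo] --> l ->
     (forall n, f (u n) <= b + n.+1%:R^-1) -> f l <= b) ->
  exists (y : V) (u : nat -> V),
    [/\ forall n, C (u n), u n @[n --> \oo] --> y & forall z, C z -> f y <= f z].
Proof.
move=> [z0 Cz0] Cmid Hlb Hconv Hf.
pose E := f @` C.
have hE : has_inf E.
  split; first by exists (f z0); exists z0.
  by exists lb => _ [z Cz <-]; exact: Hlb.
pose d := inf E.
have hd : forall z, C z -> d <= f z.
  by move=> z Cz; apply: (ge_inf hE.2); exists z.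
have hu : forall n : nat, exists z, C z /\ f z < d + n.+1%:R^-1.
  move=> n; have [_ [z Cz <-] h] := @inf_adherent R E n.+1%:R^-1 (eq_ind_r is_true (ltr0Sn R n) (invr_gt0 _)) hE.
  by exists z.
have [u Hu] := choice hu.
have Hc : forall n k, `|u n - u k| ^+ 2 <= 2 * (n.+1%:R^-1 + k.+1%:R^-1).
  move=> n k; have [Cn fn] := Hu n; have [Ck fk] := Hu k.
  have h1 := hd _ (Cmid _ _ Cn Ck).
  have h2 := Hconv _ _ Cn Ck.
  move: h1 h2 fn fk; set a := (n.+1%:R^-1 : R); set b := (k.+1%:R^-1 : R).
  set X := `|u n - u k| ^+ 2; move=> h1 h2 fn fk.
  lra.
have cu := seq_cvg u _ Hc.
exists (lim (u n @[n --> \oo])), u; split => //.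
  by move=> n; have [] := Hu n.
have fy : f (lim (u n @[n --> \oo])) <= d.
  by apply: (Hf u) => // n; have [_ /ltW] := Hu n.
by move=> z Cz; apply: le_trans fy (hd _ Cz).
Qed.
End Min.
Section IP.
Variables (R : realType) (V : completeNormedModType R) (ip : V -> V -> R).
Hypothesis Hip : inner_product ip.

Lemma ipC x y : ip x y = ip y x.
Proof. by case: Hip. Qed.
Lemma ipxx x : ip x x = `|x| ^+ 2.
Proof. by case: Hip. Qed.
Lemma ipZDl a x y z : ip (a *: x + y) z = a * ip x z + ip y z.
Proof. by case: Hip. Qed.
Lemma ip0l z : ip 0 z = 0.
Proof. have := ipZDl 1 0 0 z; rewrite scale1r addr0 mul1r; lra. Qed.
Lemma ipDl x y z : ip (x + y) z = ip x z + ip y z.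
Proof. by rewrite -{1}(scale1r x) ipZDl mul1r. Qed.
Lemma ipZl a x z : ip (a *: x) z = a * ip x z.
Proof. by rewrite -(addr0 (a *: x)) ipZDl ip0l addr0. Qed.
Lemma ipNl x z : ip (- x) z = - ip x z.
Proof. by rewrite -scaleN1r ipZl mulN1r. Qed.
Lemma ipBl x y z : ip (x - y) z = ip x z - ip y z.
Proof. by rewrite ipDl ipNl. Qed.
Lemma ipDr x y z : ip z (x + y) = ip z x + ip z y.
Proof. by rewrite ipC ipDl !(ipC z). Qed.
Lemma ipZr a x z : ip z (a *: x) = a * ip z x.
Proof. by rewrite ipC ipZl ipC. Qed.
Lemma ipNr x z : ip z (- x) = - ip z x.
Proof. by rewrite ipC ipNl ipC. Qed.
Lemma ipBr x y z : ip z (x - y) = ip z x - ip z y.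
Proof. by rewrite ipDr ipNr. Qed.
Lemma ip0r z : ip z 0 = 0.
Proof. by rewrite ipC ip0l. Qed.

Lemma ip_suml n (F : 'I_n -> V) z : ip (\sum_(i < n) F i) z = \sum_(i < n) ip (F i) z.
Proof.
elim/big_rec2: _ => [|i y1 y2 _ <-]; first by rewrite ip0l.
by rewrite ipDl.
Qed.
Lemma ip_sumr n (F : 'I_n -> V) z : ip z (\sum_(i < n) F i) = \sum_(i < n) ip z (F i).
Proof. by rewrite ipC ip_suml; apply: eq_bigr => i _; rewrite ipC. Qed.

Lemma sqnD x y : `|x + y| ^+ 2 = `|x| ^+ 2 + 2 * ip x y + `|y| ^+ 2.
Proof. rewrite -!ipxx ipDl !ipDr (ipC y x); ring. Qed.
Lemma sqnB x y : `|x - y| ^+ 2 = `|x| ^+ 2 - 2 * ip x y + `|y| ^+ 2.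
Proof. by rewrite sqnD ipNr normrN; ring. Qed.
Lemma sqnZ (a : R) (x : V) : `|a *: x| ^+ 2 = a ^+ 2 * `|x| ^+ 2.
Proof. by rewrite normrZ exprMn real_normK ?num_real. Qed.

Lemma ip_le x y : 2 * ip x y <= `|x| ^+ 2 + `|y| ^+ 2.
Proof. have := sqnB x y; have := sqr_ge0 `|x - y|; lra. Qed.
Definition k (p : V * V) (w : V) := ip (w - p.1) (w + p.2).

Ltac ipexp := rewrite -?ipxx ?(ipDl, ipDr, ipBl, ipBr, ipNl, ipNr, ipZl, ipZr, ip0l, ip0r).

Lemma k4 p w : 4 * k p w = `|2 *: w - p.1 + p.2| ^+ 2 - `|p.1 + p.2| ^+ 2.
Proof.
rewrite /k; ipexp.
rewrite ?(ipC p.2 w) ?(ipC p.1 w) ?(ipC p.2 p.1).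
ring.
Qed.

Lemma kc p w : k p w = `|w - 2^-1 *: (p.1 - p.2)| ^+ 2 - 4^-1 * `|p.1 + p.2| ^+ 2.
Proof.
rewrite /k; ipexp.
rewrite ?(ipC p.2 w) ?(ipC p.1 w) ?(ipC p.2 p.1).
field; by rewrite ?pnatr_eq0.
Qed.

Lemma kmid p a b : k p (2^-1 *: (a + b)) = 2^-1 * (k p a + k p b) - 4^-1 * `|a - b| ^+ 2.
Proof.
rewrite /k; ipexp.
rewrite ?(ipC p.2 a) ?(ipC p.1 a) ?(ipC p.2 p.1) ?(ipC p.2 b) ?(ipC p.1 b) ?(ipC b a).
field; by rewrite ?pnatr_eq0.
Qed.

Lemma kdir p w (t : R) (e : V) : k p (w + t *: e) = k p w + t * ip (2 *: w + p.2 - p.1) e + t ^+ 2 * `|e| ^+ 2.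
Proof.
rewrite /k; ipexp.
rewrite ?(ipC p.2 w) ?(ipC p.1 w) ?(ipC p.2 p.1) ?(ipC p.2 e) ?(ipC p.1 e) ?(ipC e w).
ring.
Qed.

Lemma sqn_mid (a b : V) : `|2^-1 *: (a + b)| ^+ 2 = 2^-1 * (`|a| ^+ 2 + `|b| ^+ 2) - 4^-1 * `|a - b| ^+ 2.
Proof.
ipexp. rewrite (ipC b a). field; by rewrite ?pnatr_eq0.
Qed.
Definition K (p0 : V * V) (s : seq (V * V)) (w : V) :=
  \big[Num.max/k p0 w]_(q <- p0 :: s) k q w.

Lemma Kge p0 s q w : q \in p0 :: s -> k q w <= K p0 s w.
Proof. move=> qs; exact: (le_bigmax_seq (k p0 w) q xpredT (fun q => k q w)). Qed.

Arguments Kge {p0 s q}.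

Lemma Kle p0 s w b : (forall q, q \in p0 :: s -> k q w <= b) -> K p0 s w <= b.
Proof.
move=> H; rewrite /K big_seq; apply: bigmax_le; first by apply: H; rewrite mem_head.
by move=> q; apply: H.
Qed.

Lemma Klt p0 s w b : (forall q, q \in p0 :: s -> k q w < b) -> K p0 s w < b.
Proof.
move=> H; rewrite /K big_seq; apply: bigmax_lt; first by apply: H; rewrite mem_head.
by move=> q; apply: H.
Qed.

Lemma Kmid p0 s a b :
  K p0 s (2^-1 *: (a + b)) <= 2^-1 * (K p0 s a + K p0 s b) - 4^-1 * `|a - b| ^+ 2.
Proof.
apply: Kle => q qs; rewrite kmid.
have := Kge a qs; have := Kge b qs; lra.
Qed.

Lemma Klb p0 s w : - 4^-1 * `|p0.1 + p0.2| ^+ 2 <= K p0 s w.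
Proof.
apply: le_trans (Kge w (mem_head p0 s)); rewrite kc.
have := sqr_ge0 `|w - 2^-1 *: (p0.1 - p0.2)|; lra.
Qed.

Lemma lim_le_h (r : nat -> R) l b : r n @[n --> \oo] --> l ->
  (forall n, r n <= b + n.+1%:R^-1) -> l <= b.
Proof.
move=> H Hb.
have H2 : r n - harmonic n @[n --> \oo] --> l - 0.
  by apply: cvgB => //; exact: cvg_harmonic.
rewrite subr0 in H2; apply: (lim_le H2) => n /=.
by rewrite lerBlDr; exact: Hb.
Qed.

Arguments lim_le_h {r l b}.

Lemma cvg_k q (u : nat -> V) l : u n @[n --> \oo] --> l -> k q (u n) @[n --> \oo] --> k q l.
Proof.
move=> H; rewrite kc; under eq_fun do rewrite kc.
apply: cvgB; first exact: cvg_sqn.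
exact: cvg_cst.
Qed.

Arguments cvg_k q {u l}.

Lemma K_closed p0 s (u : nat -> V) l b : u n @[n --> \oo] --> l ->
  (forall n, K p0 s (u n) <= b + n.+1%:R^-1) -> K p0 s l <= b.
Proof.
move=> H Hb; apply: Kle => q qs.
apply: (lim_le_h (cvg_k q H)) => n.
exact: le_trans (Kge _ qs) (Hb n).
Qed.

Lemma sqn_closed (u : nat -> V) l b : u n @[n --> \oo] --> l ->
  (forall n, `|u n| ^+ 2 <= b + n.+1%:R^-1) -> `|l| ^+ 2 <= b.
Proof.
move=> H Hb.
have H1 : `|u n| ^+ 2 @[n --> \oo] --> `|l| ^+ 2.
  by rewrite expr2; under eq_fun do rewrite expr2; apply: cvgM; apply: cvg_norm.
exact: (lim_le_h H1).
Qed.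

Lemma K_min_exists p0 s : exists w, forall z, K p0 s w <= K p0 s z.
Proof.
have [y [u [_ _ Hy]]] := @min_exists R V setT (K p0 s) (- 4^-1 * `|p0.1 + p0.2| ^+ 2)
  (ex_intro _ 0 I) (fun _ _ _ _ => I) (fun z _ => Klb p0 s z) (fun a b _ _ => Kmid p0 s a b)
  (fun u l b H Hb => K_closed p0 s u l b H Hb).
by exists y => z; apply: Hy.
Qed.
Variable G : set (V * V).
Hypothesis Gmono : forall p q, G p -> G q -> 0 <= ip (p.1 - q.1) (p.2 - q.2).

Lemma conv_ineq n (pt : 'I_n -> V * V) (lam : 'I_n -> R) w :
  (forall i, G (pt i)) -> (forall i, 0 <= lam i) -> \sum_i lam i = 1 ->
  \sum_i lam i * k (pt i) w <=
    4^-1 * `|\sum_i lam i *: (2 *: w + (pt i).2 - (pt i).1)| ^+ 2.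
Proof.
move=> HG Hl Hs.
set X := \sum_i lam i *: (pt i).1; set U := \sum_i lam i *: (pt i).2.
set S := \sum_i lam i * ip (pt i).1 (pt i).2.
have hA : \sum_i lam i *: (2 *: w + (pt i).2 - (pt i).1) = 2 *: w + U - X.
  under eq_bigr do rewrite !scalerDr scalerN.
  by rewrite !big_split /= sumrN -scaler_suml Hs scale1r.
have e1 : ip w U = \sum_i lam i * ip w (pt i).2.
  by rewrite ip_sumr; apply: eq_bigr => i _; rewrite ipZr.
have e2 : ip X w = \sum_i lam i * ip (pt i).1 w.
  by rewrite ip_suml; apply: eq_bigr => i _; rewrite ipZl.
have hK : \sum_i lam i * k (pt i) w = k (X, U) w + ip X U - S.
  transitivity (\sum_i (lam i * ip w w + lam i * ip w (pt i).2
       - lam i * ip (pt i).1 w - lam i * ip (pt i).1 (pt i).2)).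
    by apply: eq_bigr => i _; rewrite /k; ipexp; ring.
  rewrite !big_split /= !sumrN -mulr_suml Hs -e1 -e2 /k /= -/S.
  ipexp; ring.
have hD : ip X U <= S.
  have h1 : forall i, \sum_j lam j * ip ((pt i).1 - (pt j).1) ((pt i).2 - (pt j).2)
      = ip (pt i).1 (pt i).2 - ip (pt i).1 U - ip X (pt i).2 + S.
    move=> i.
    transitivity (\sum_j (lam j * ip (pt i).1 (pt i).2 - lam j * ip (pt i).1 (pt j).2
       - lam j * ip (pt j).1 (pt i).2 + lam j * ip (pt j).1 (pt j).2)).
      by apply: eq_bigr => j _; ipexp; ring.
    rewrite !big_split /= !sumrN -mulr_suml Hs mul1r.
    rewrite ip_sumr ip_suml -/S.
    by congr (_ - _ - _ + _); apply: eq_bigr => j _; rewrite ?ipZr ?ipZl.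
  have h2 : 0 <= \sum_i lam i * \sum_j lam j * ip ((pt i).1 - (pt j).1) ((pt i).2 - (pt j).2).
    apply: sumr_ge0 => i _; apply: mulr_ge0 => //; apply: sumr_ge0 => j _.
    by apply: mulr_ge0 => //; apply: Gmono.
  have h3 : \sum_i lam i * \sum_j lam j * ip ((pt i).1 - (pt j).1) ((pt i).2 - (pt j).2)
      = 2 * S - 2 * ip X U.
    under eq_bigr do rewrite h1.
    transitivity (\sum_i (lam i * ip (pt i).1 (pt i).2 - lam i * ip (pt i).1 U
       - lam i * ip X (pt i).2 + lam i * S)).
      by apply: eq_bigr => i _; ring.
    rewrite !big_split /= !sumrN -mulr_suml Hs mul1r.
    have -> : \sum_i lam i * ip (pt i).1 U = ip X U.
      by rewrite ip_suml; apply: eq_bigr => i _; rewrite ipZl.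
    have -> : \sum_i lam i * ip X (pt i).2 = ip X U.
      by rewrite ip_sumr; apply: eq_bigr => i _; rewrite ipZr.
    rewrite /S; ring.
  lra.
rewrite hK hA.
have := k4 (X, U) w; rewrite /=.
have -> : 2 *: w - X + U = 2 *: w + U - X by rewrite addrAC.
have := sqr_ge0 `|X + U|.
lra.
Qed.
Lemma cvg_sqn0 (u : nat -> V) l : u n @[n --> \oo] --> l ->
  `|u n| ^+ 2 @[n --> \oo] --> `|l| ^+ 2.
Proof.
by move=> H; rewrite expr2; under eq_fun do rewrite expr2; apply: cvgM; apply: cvg_norm.
Qed.

Lemma finite_case p0 s w : G p0 -> (forall q, q \in s -> G q) ->
  (forall z, K p0 s w <= K p0 s z) -> K p0 s w <= 0.
Proof.
move=> G0 Gs Hmin.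
pose L := p0 :: s.
pose n := size L.
pose pt (i : 'I_n) := nth p0 L i.
have ptL : forall i, pt i \in L by move=> i; apply: mem_nth.
have HG : forall i, G (pt i).
  move=> i; have := ptL i; rewrite inE => /orP[/eqP->//|]; exact: Gs.
have Lpt : forall q, q \in L -> exists i : 'I_n, pt i = q.
  move=> q qL; have hq : (index q L < n)%N by rewrite index_mem.
  by exists (Ordinal hq); rewrite /pt /= nth_index.
set m := K p0 s w.
rewrite leNgt; apply/negP => m0.
pose eta := m / 4.
have eta0 : 0 < eta by rewrite divr_gt0.
pose a i := 2 *: w + (pt i).2 - (pt i).1.
pose C := [set y | exists lam : 'I_n -> R, [/\ forall i, 0 <= lam i, \sum_i lam i = 1,
     forall i, lam i != 0 -> m - eta <= k (pt i) w & y = \sum_i lam i *: a i]].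
have Cact : forall i, m - eta <= k (pt i) w -> C (a i).
  move=> i ai; exists (fun j => (j == i)%:R); split.
  - by move=> j; rewrite ler0n.
  - by rewrite (bigD1 i) //= eqxx big1 ?addr0 // => j /negbTE ->.
  - move=> j /=; case: (eqVneq j i) => [-> _ //|_]; by rewrite eqxx.
  - by rewrite (bigD1 i) //= eqxx scale1r big1 ?addr0 // => j /negbTE ->; rewrite scale0r.
have Cconv : forall z1 z2 t, C z1 -> C z2 -> 0 <= t <= 1 -> C ((1 - t) *: z1 + t *: z2).
  move=> z1 z2 t [l1 [l1p l1s l1a ->]] [l2 [l2p l2s l2a ->]] /andP[t0 t1].
  exists (fun i => (1 - t) * l1 i + t * l2 i); split.
  - move=> i; apply: addr_ge0; apply: mulr_ge0 => //; lra.
  - by rewrite big_split /= -!mulr_sumr l1s l2s; ring.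
  - move=> i /= h; case: (eqVneq (l1 i) 0) => [h1|h1]; last exact: l1a.
    apply: l2a; apply: contra_neq h => h2; rewrite h1 h2; ring.
  - rewrite !scaler_sumr -big_split /=; apply: eq_bigr => i _.
    by rewrite !scalerA -scalerDl.
have Cmid : forall z1 z2, C z1 -> C z2 -> C (2^-1 *: (z1 + z2)).
  move=> z1 z2 h1 h2.
  have -> : 2^-1 *: (z1 + z2) = (1 - 2^-1) *: z1 + 2^-1 *: z2.
    rewrite scalerDr; congr (_ + _); congr (_ *: _).
    by field; rewrite ?pnatr_eq0.
  by apply: Cconv => //; apply/andP; split; lra.
have Cne : C !=set0.
  case: (pselect (exists i, m - eta <= k (pt i) w)) => [[i ai]|nex].
    by exists (a i); exact: Cact.
  have : K p0 s w < m.
    apply: Klt => q qL; have [i <-] := Lpt q qL.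
    have : ~ (m - eta <= k (pt i) w) by move=> h; apply: nex; exists i.
    move/negP; rewrite -ltNge => h; lra.
  by rewrite ltxx.
have [y [u [Cu uy Hy]]] := @min_exists R V C (fun y => `|y| ^+ 2) 0 Cne Cmid
  (fun z _ => sqr_ge0 _) (fun a b _ _ => ltac:(by rewrite /= sqn_mid))
  (fun u l b H Hb => sqn_closed u l b H Hb).
have [y0|ynz] := eqVneq y 0.
  have [N hN] : exists N, `|u N| ^+ 2 < m / 16.
    case: (pselect (exists N, `|u N| ^+ 2 < m / 16)) => // nex.
    have hge : forall N, m / 16 <= `|u N| ^+ 2.
      move=> N; rewrite leNgt; apply/negP => h; apply: nex; by exists N.
    have := lim_ge (cvg_sqn0 _ _ uy) hge; rewrite y0 normr0 expr0n /=.
    have : 0 < m / 16 by rewrite divr_gt0.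
    lra.
  have [lam [lp ls la hz]] := Cu N.
  have h1 : m - eta <= \sum_i lam i * k (pt i) w.
    have : \sum_i lam i * (m - eta) <= \sum_i lam i * k (pt i) w.
      apply: ler_sum => i _; case: (eqVneq (lam i) 0) => [->|hi].
        by rewrite !mul0r.
      by apply: ler_wpM2l => //; apply: la.
    by rewrite -mulr_suml ls mul1r.
  have h2 := conv_ineq n pt lam w HG lp ls.
  rewrite -/(a _) in h2.
  have h3 : \sum_i lam i *: (2 *: w + (pt i).2 - (pt i).1) = u N by rewrite hz.
  rewrite h3 in h2.
  rewrite /eta in h1; lra.
have hy2 : 0 < `|y| ^+ 2 by rewrite exprn_gt0 // normr_gt0.
have Hact : forall i, m - eta <= k (pt i) w -> `|y| ^+ 2 <= ip (a i) y.
  move=> i ai.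
  have Ht : forall t, 0 < t -> t <= 1 ->
      0 <= 2 * t * ip y (a i - y) + t ^+ 2 * `|a i - y| ^+ 2.
    move=> t t0 t1.
    have Hn : forall N, `|y| ^+ 2 <= `|(1 - t) *: u N + t *: a i| ^+ 2.
      move=> N; apply: Hy; apply: Cconv => //; first exact: Cact.
      by apply/andP; split; lra.
    have Hc : (1 - t) *: u N + t *: a i @[N --> \oo] --> (1 - t) *: y + t *: a i.
      by apply: cvgD; [exact: cvgZr | exact: cvg_cst].
    have := lim_ge (cvg_sqn0 _ _ Hc) Hn.
    have E : forall v : V, `|(1 - t) *: y + t *: v| ^+ 2 =
        `|y| ^+ 2 + (2 * t * ip y (v - y) + t ^+ 2 * `|v - y| ^+ 2).
      by move=> v; ipexp; rewrite (ipC v y); ring.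
    rewrite E.
    lra.
  have : 0 <= ip y (a i - y).
    rewrite leNgt; apply/negP => hneg.
    have hD : 0 <= `|a i - y| ^+ 2 by apply: sqr_ge0.
    move: hneg hD (Ht) => /=.
    set g := ip y (a i - y); set D := `|a i - y| ^+ 2 => hneg hD Ht'.
    pose t := - g / (- g + D + 1).
    have den : 0 < - g + D + 1 by lra.
    have tpos : 0 < t by rewrite divr_gt0 //; lra.
    have ht : t * (- g + D + 1) = - g by rewrite /t divfK // gt_eqF.
    have t1 : t <= 1 by rewrite /t ler_pdivrMr // mul1r; lra.
    have := Ht' t tpos t1.
    nra.
  rewrite ipBr ipxx ipC; lra.
pose B := \sum_i `|ip (a i) y|.
have B0 : 0 <= B by apply: sumr_ge0 => i _.
have HB : forall i, `|ip (a i) y| <= B.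
  by move=> i; rewrite /B (bigD1 i) //= lerDl; apply: sumr_ge0.
pose t := eta / (2 * (B + `|y| ^+ 2 + eta)).
have den : 0 < 2 * (B + `|y| ^+ 2 + eta) by lra.
have tpos : 0 < t by rewrite divr_gt0.
have ht : t * (2 * (B + `|y| ^+ 2 + eta)) = eta by rewrite /t divfK // gt_eqF.
have t1 : t < 1.
  by rewrite /t ltr_pdivrMr // mul1r; lra.
have hlt : K p0 s (w + t *: (- y)) < m.
  apply: Klt => q qL; have [i <-] := Lpt q qL.
  rewrite kdir normrN ipNr -/(a i).
  have hk : k (pt i) w <= m := Kge w (ptL i).
  have hty : t ^+ 2 * `|y| ^+ 2 < t * `|y| ^+ 2.
    by rewrite ltr_pM2r // expr2 gtr_pMr.
  have [ai|nai] := lerP (m - eta) (k (pt i) w).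
    have := Hact i ai; nra.
  have := HB i; have := ler_norm (ip (a i) y); rewrite -normrN => hn hb.
  have : t * - ip (a i) y <= t * B.
    by rewrite ler_pM2l //; apply: le_trans (ler_norm _) _; rewrite normrN.
  rewrite normrN; nra.
have := Hmin (w + t *: (- y)); rewrite -/m; lra.
Qed.
Lemma sq_lt (x e : R) : 0 <= x -> 0 < e -> x ^+ 2 < e ^+ 2 -> x < e.
Proof.
move=> x0 e0 h; rewrite ltNge; apply/negP => he.
have : e ^+ 2 <= x ^+ 2 by rewrite lerXn2r // ?nnegrE // ltW.
lra.
Qed.

Lemma cvg_close (u v : nat -> V) (l : V) (c : R) : u n @[n --> \oo] --> l ->
  (forall n, `|v n - u n| ^+ 2 <= c * n.+1%:R^-1) -> v n @[n --> \oo] --> l.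
Proof.
move=> Hu Hc; apply/cvgrPdist_lt => e e0.
pose c' := `|c| + 1.
have c'0 : 0 < c' by rewrite /c'; have := normr_ge0 c; lra.
have e2 : 0 < e / 2 by rewrite divr_gt0.
have e20 : 0 < (e / 2) ^+ 2 by rewrite exprn_gt0.
have [N HN] : exists N : nat, c' / (e / 2) ^+ 2 < N.+1%:R.
  by exists (Num.Def.truncn (c' / (e / 2) ^+ 2)); exact: truncnS_gt.
near=> n.
have h1 : `|l - u n| < e / 2 by near: n; apply: cvgr_dist_lt.
have Nn : (N <= n)%N by near: n; exact: nbhs_infty_ge.
have h2 : `|v n - u n| < e / 2.
  apply: sq_lt => //.
  apply: le_lt_trans (Hc n) _.
  have hn1 : n.+1%:R^-1 <= N.+1%:R^-1 :> R.
    by rewrite lef_pV2 ?posrE ?ltr0n // ler_nat ltnS.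
  have hN0 : 0 <= N.+1%:R^-1 :> R by rewrite invr_ge0.
  have hNa : N.+1%:R * N.+1%:R^-1 = 1 :> R by rewrite mulfV // pnatr_eq0.
  have h5 : c' < (e / 2) ^+ 2 * N.+1%:R.
    by rewrite [_ ^+ 2 * _]mulrC -ltr_pdivrMr.
  move: hn1 hN0 hNa h5; set a := (N.+1%:R^-1 : R); set b := (n.+1%:R^-1 : R).
  set M := (N.+1%:R : R); set E := (e / 2) ^+ 2; move=> hn1 hN0 hNa h5.
  have : c * b <= c' * a.
    apply: (le_trans (ler_norm _)); rewrite normrM (ger0_norm (ltW (eq_ind_r is_true (ltr0Sn R n) (invr_gt0 _)))).
    apply: ler_pM; [exact: normr_ge0|rewrite invr_ge0 //|rewrite /c'; lra|exact: hn1].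
  have : c' * a < E.
    have : c' * a < E * M * a by rewrite ltr_pM2r // lt0r invr_eq0 pnatr_eq0 hN0.
    have -> : E * M * a = E by rewrite -mulrA hNa mulr1.
    by [].
  lra.
have := ler_distD (u n) l (v n).
rewrite (distrC (u n) (v n)); lra.
Unshelve. all: by end_near.
Qed.
Lemma sq_tri (a b c : V) : `|a - b| ^+ 2 <= 2 * `|a - c| ^+ 2 + 2 * `|c - b| ^+ 2.
Proof.
have -> : a - b = (a - c) + (c - b) by rewrite addrA subrK.
rewrite sqnD; have := ip_le (a - c) (c - b); lra.
Qed.

Lemma core_exists : G !=set0 -> exists w, forall q, G q -> k q w <= 0.
Proof.
move=> [p0 G0].
pose W (s : seq (V * V)) := get [set w | forall z, K p0 s w <= K p0 s z].
have hW : forall s z, K p0 s (W s) <= K p0 s z.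
  by move=> s; exact: (getPex (K_min_exists p0 s)).
pose msv s := K p0 s (W s).
pose Gs (s : seq (V * V)) := forall q, q \in s -> G q.
have hm : forall s, Gs s -> msv s <= 0.
  by move=> s H; exact: (finite_case p0 s (W s) G0 H (hW s)).
have hsc : forall s z, msv s + 2^-1 * `|z - W s| ^+ 2 <= K p0 s z.
  move=> s z; have h1 := Kmid p0 s z (W s); have h2 := hW s (2^-1 *: (z + W s)).
  rewrite /msv; lra.
have hmono : forall s t z, {subset s <= t} -> K p0 s z <= K p0 t z.
  move=> s t z st; apply: Kle => q; rewrite inE => /orP[/eqP->|qs].
    by apply: Kge; rewrite mem_head.
  by apply: Kge; rewrite inE (st _ qs) orbT.
have hdist : forall s t, {subset s <= t} -> 2^-1 * `|W t - W s| ^+ 2 <= msv t - msv s.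
  move=> s t st; have := hsc s (W t); have := hmono s t (W t) st; rewrite /msv; lra.
pose S := [set r | exists s, Gs s /\ r = msv s].
have hS : has_sup S.
  split; first by exists (msv [::]); exists [::]; split => // q; rewrite in_nil.
  by exists 0 => _ [s [hs ->]]; exact: hm.
pose M := sup S.
have hMs : forall s, Gs s -> msv s <= M.
  by move=> s hs; apply: sup_upper_bound => //; exists s.
have hsq : forall n : nat, exists s, Gs s /\ M - n.+1%:R^-1 < msv s.
  move=> n.
  have [_ [s [hs ->]] h] := @sup_adherent R S n.+1%:R^-1 (eq_ind_r is_true (ltr0Sn R n) (invr_gt0 _)) hS.
  by exists s.
have [sq Hsq] := choice hsq.
pose u n := W (sq n).
have Hgap : forall t n, Gs t -> {subset sq n <= t} -> `|W t - u n| ^+ 2 <= 4 * n.+1%:R^-1.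
  move=> t n ht st; have := hdist _ _ st; have := hMs t ht; have [_ h] := Hsq n.
  have a0 : 0 <= n.+1%:R^-1 :> R by rewrite invr_ge0.
  rewrite /u; move: (msv t) (msv (sq n)) (`|W t - W (sq n)| ^+ 2) (n.+1%:R^-1 : R) h a0.
  move=> x y X a h a0 h1 h2; lra.
have Hc : forall n k, `|u n - u k| ^+ 2 <= 16 * (n.+1%:R^-1 + k.+1%:R^-1).
  move=> n k; pose t := sq n ++ sq k.
  have ht : Gs t.
    by move=> q; rewrite mem_cat => /orP[]; [apply: (Hsq n).1 | apply: (Hsq k).1].
  have h1 := Hgap t n ht (fun q h => ltac:(by rewrite mem_cat h)).
  have h2 := Hgap t k ht (fun q h => ltac:(by rewrite mem_cat h orbT)).
  have := sq_tri (u n) (u k) (W t).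
  rewrite (distrC (u n) (W t)).
  have a0 : 0 <= n.+1%:R^-1 :> R by rewrite invr_ge0.
  have b0 : 0 <= k.+1%:R^-1 :> R by rewrite invr_ge0.
  move: h1 h2 a0 b0; set a := (n.+1%:R^-1 : R); set b := (k.+1%:R^-1 : R); lra.
have cu := seq_cvg u _ Hc.
exists (lim (u n @[n --> \oo])) => q Gq.
pose v n := W (q :: sq n).
have hGv : forall n, Gs (q :: sq n).
  by move=> n r; rewrite inE => /orP[/eqP->//|]; apply: (Hsq n).1.
have hv : v n @[n --> \oo] --> lim (u n @[n --> \oo]).
  apply: (cvg_close u v _ 4 cu) => n.
  by apply: Hgap => // r h; rewrite inE h orbT.
apply: (lim_le (cvg_k q hv)) => n.
apply: le_trans (hm _ (hGv n)).
by apply: Kge; rewrite !inE eqxx orbT.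
Qed.
End IP.

Section Final.
Variables (R : realType) (V : completeNormedModType R) (ip : V -> V -> R).
Hypothesis Hip : inner_product ip.
Let ipC' := @ipC _ _ _ Hip.
Let ipZr' := @ipZr _ _ _ Hip.
Let ipZl' := @ipZl _ _ _ Hip.
Let ipNl' := @ipNl _ _ _ Hip.
Let ipNr' := @ipNr _ _ _ Hip.
Let ipBr' := @ipBr _ _ _ Hip.
Let ipBl' := @ipBl _ _ _ Hip.
Let ipxx' := @ipxx _ _ _ Hip.
Let ip0l' := @ip0l _ _ _ Hip.
Let ip_le' := @ip_le _ _ _ Hip.

Lemma minty (A : V -> set V) (g : R) (z : V) :
  maximal_monotone ip A -> 0 < g -> (exists x u, A x u) ->
  A (resolvent A g z) (g^-1 *: (z - resolvent A g z)).
Proof.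
move=> [Amono Amax] g0 [x0 [u0 Ax0]].
suff hex : exists y, A y (g^-1 *: (z - y)) by exact: (getPex hex).
pose G := [set p : V * V | exists x u, A x u /\ p = (x - z, g *: u)].
have Gmono : forall p q, G p -> G q -> 0 <= ip (p.1 - q.1) (p.2 - q.2).
  move=> _ _ [x1 [u1 [A1 ->]]] [x2 [u2 [A2 ->]]] /=.
  have -> : x1 - z - (x2 - z) = x1 - x2 by rewrite opprB addrA subrK.
  rewrite -scalerBr ipZr'; apply: mulr_ge0; [exact: ltW | exact: Amono].
have GN : G !=set0 by exists (x0 - z, g *: u0); exists x0, u0.
have [w Hw] := core_exists _ _ _ Hip _ Gmono GN.
pose y := w + z.
pose v0 := g^-1 *: (z - y).
have key : forall x u, A x u -> 0 <= ip (x - y) (u - v0).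
  move=> x u Axu.
  have := Hw (x - z, g *: u) (ex_intro _ x (ex_intro _ u (conj Axu erefl))).
  rewrite /k /=.
  have -> : w - (x - z) = y - x by rewrite /y opprB addrA addrAC.
  have -> : w = y - z by rewrite /y addrK.
  have -> : ip (x - y) (u - v0) = - g^-1 * ip (y - x) (y - z + g *: u).
    rewrite -(opprB y x) ipNl' mulNr; congr (- _); rewrite -ipZr'; congr (ip _ _).
    rewrite /v0 !scalerDr scalerA mulVf ?gt_eqF // scale1r.
    rewrite /y !scalerN scalerDr.
    set a := g^-1 *: w; set c := g^-1 *: z.
    by rewrite addrK opprD opprK [a + c]addrC addKr addrC.
  move=> h; rewrite mulNr -mulrN; apply: mulr_ge0; first by rewrite invr_ge0 ltW.
  by rewrite oppr_ge0.
pose B := fun x v => A x v \/ (x = y /\ v = v0).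
have Bmono : monotone_op ip B.
  move=> x1 x2 u1 u2 [A1|[-> ->]] [A2|[-> ->]].
  - exact: Amono.
  - exact: key.
  - by rewrite -(opprB x2) ipNl' -(opprB u2) ipNr' opprK; exact: key.
  - by rewrite subrr ip0l'.
exists y; apply: (Amax B Bmono) => [x u h|]; [by left | by right].
Qed.

Lemma resolvent_ne (A : V -> set V) (g : R) (z1 z2 : V) :
  maximal_monotone ip A -> 0 < g -> (exists x u, A x u) ->
  `|resolvent A g z1 - resolvent A g z2| <= `|z1 - z2|.
Proof.
move=> Am g0 ne.
have h1 := minty A g z1 Am g0 ne; have h2 := minty A g z2 Am g0 ne.
move: h1 h2; set y1 := resolvent A g z1; set y2 := resolvent A g z2 => h1 h2.
have := Am.1 _ _ _ _ h1 h2.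
have -> : g^-1 *: (z1 - y1) - g^-1 *: (z2 - y2) = g^-1 *: ((z1 - z2) - (y1 - y2)).
  rewrite -scalerBr; congr (_ *: _).
  by rewrite !opprB (addrACA z1 (- y1) y2 (- z2)) (addrACA z1 (- z2) y2 (- y1)) (addrC (- y1)).
rewrite ipZr' ipBr' ipxx' pmulr_rge0 ?invr_gt0 // subr_ge0 => h.
have h3 := ip_le' (y1 - y2) (z1 - z2).
have h4 : `|y1 - y2| ^+ 2 <= `|z1 - z2| ^+ 2 by lra.
by rewrite -(@ler_pXn2r _ 2) // ?nnegrE ?normr_ge0.
Qed.
End Final.
From mathcomp Require Import zify.

Theorem lemma8p1 (R : realType) (V : completeNormedModType R)
  (ip : V -> V -> R) (A : V -> set V) (gamma : nat -> R) (x : nat -> V) :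
  inner_product ip ->
  maximal_monotone ip A ->
  zer A !=set0 ->
  (forall n, 0 < gamma n) ->
  (forall n, x n.+1 = resolvent A (gamma n) (x n)) ->
  (forall (n m : nat) (p : V), (1 <= m)%N ->
     `|x (n + m)%N - p| <= `|x n - p|
        + \sum_(n <= i < n + m) `|p - resolvent A (gamma i) p|)
  /\
  (forall (r n m : nat) (p : V), AF A gamma (chi n m r) p ->
     forall l : nat, (l <= m)%N ->
       `|x (n + l)%N - p| < `|x n - p| + (r.+1%:R)^-1).
Proof.
move=> Hip Am [p0 zp0] gpos Hx.
have ne : exists x u, A x u by exists p0, 0.
have J_ne : forall i z1 z2, `|resolvent A (gamma i) z1 - resolvent A (gamma i) z2| <= `|z1 - z2|.
  by move=> i z1 z2; apply: (resolvent_ne _ _ _ Hip) => //.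
have partI : forall n m p, `|x (n + m)%N - p| <= `|x n - p|
        + \sum_(n <= i < n + m) `|p - resolvent A (gamma i) p|.
  move=> n m p; elim: m => [|m IH].
    by rewrite addn0 big_geq // addr0.
  rewrite addnS Hx big_nat_recr ?leq_addr //=.
  have t1 := ler_distD (resolvent A (gamma (n + m)%N) p) (resolvent A (gamma (n + m)%N) (x (n + m)%N)) p.
  have t2 := J_ne (n + m)%N (x (n + m)%N) p.
  rewrite (distrC (resolvent A (gamma (n + m)%N) p) p) in t1.
  lra.
split.
  by move=> n m p _; exact: partI.
move=> r n m p hp l hl.
have r0 : 0 < r.+1%:R^-1 :> R by rewrite invr_gt0 ltr0n.
case: l hl => [|l] hl.
  by rewrite addn0 ltrDl.
have := partI n l.+1 p.
have hsum : \sum_(n <= i < n + l.+1) `|p - resolvent A (gamma i) p|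
    <= l.+1%:R * (chi n m r).+1%:R^-1.
  apply: le_trans (_ : \sum_(n <= i < n + l.+1) (chi n m r).+1%:R^-1 <= _).
    apply: ler_sum_nat => i /andP[_ hi]; apply: hp.
    by rewrite /chi; apply: leq_trans (leq_maxl _ _); lia.
  by rewrite sumr_const_nat addnC addnK mulr_natl.
have hlt : l.+1%:R * (chi n m r).+1%:R^-1 < r.+1%:R^-1 :> R.
  rewrite ltr_pdivrMr ?ltr0n // mulrC ltr_pdivlMr ?ltr0n // -natrM ltr_nat.
  rewrite ltnS /chi; apply: leq_trans (leq_maxr _ _); rewrite leq_mul2r hl orbT //.
move=> h; apply: le_lt_trans h _; rewrite ltrD2l; exact: le_lt_trans hsum hlt.
Qed.
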